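(* Let $u\le v$ in $S_n$, let $I$ be a strong hypercube decomposition of $[u,v]$ with hypercube maps $\theta_x$, and let $\prec$ be a reflection order. Then for each $x\in I$ and each antichain $Y\in\mathcal{A}_x$ there exists a unique ordering $Y=\{y_1,\dots,y_k\}$ such that $$x\to\theta_x(\{y_1\})\to\theta_x(\{y_1,y_2\})\to\cdots\to\theta_x(\{y_1,\dots,y_k\})$$ is an increasing path (edge labels strictly increasing under $\prec$) from $x$ to $\theta_x(Y)$ in the Bruhat graph.
   Context: $S_n$ is the symmetric group with simple reflections $s_i=(i\ i{+}1)$, length $\ell$, and $T$ the set of transpositions. The Bruhat graph $\Gamma$ has vertex set $S_n$ and edges $w\xrightarrow{t}tw$ labelled $t$ whenever $t\in T$, $\ell(w)<\ell(tw)$; Bruhat order is reachability; $\Gamma(u,v)$ is the induced subgraph on $[u,v]$. A diamond is a subgraph of $\Gamma$ with four distinct vertices $x_1,\dots,x_4$ and edges $x_1\to x_2\to x_4$, $x_1\to x_3\to x_4$; $X\subset[u,v]$ is diamond-closed in $[u,v]$ if it contains the fourth vertex of any diamond in $[u,v]$ of which it contains three vertices. A reflection order is a total order $\prec$ on $T$ with, for all $a<b<c$, either $(a\,b)\prec(a\,c)\prec(b\,c)$ or $(b\,c)\prec(a\,c)\prec(a\,b)$. For an order ideal $I\subset[u,v]$ and $x\in I$, $\mathcal{Y}_x=\{y\in[u,v]\setminus I: x\to y\}$ and $\mathcal{A}_x$ is the set of Bruhat antichains contained in $\mathcal{Y}_x$, with $Y_1\to Y_2$ iff $Y_1\subset Y_2$,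 $|Y_2\setminus Y_1|=1$. A strong hypercube cluster at $x$ is a map $\theta_x:\mathcal{A}_x\to[u,v]$ with (HC1) $\theta_x(\varnothing)=x$; (HC2) $\theta_x(\{y\})=y$; (HC3) $Y_1\to Y_2$ implies $\theta_x(Y_1)\to\theta_x(Y_2)$ in $\Gamma$; (HC4) if $|Y|=|Y'|=|Y\cap Y'|+1$ and $\theta_x(Y\cap Y'),\theta_x(Y),\theta_x(Y'),w$ form a diamond in $\Gamma(u,v)$ with top $w$, then $Y\cup Y'$ is an antichain and $\theta_x(Y\cup Y')=w$. A strong hypercube decomposition of $[u,v]$ is an order ideal $I=[u,z]$ ($z\in[u,v]$) that is diamond-closed in $[u,v]$ and such that every $x\in I$ has a strong hypercube cluster $\theta_x$ relative to $I$. *)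

(* Defs.v *)
From mathcomp Require Import all_boot all_fingroup.
Set Implicit Arguments. Unset Strict Implicit. Unset Printing Implicit Defensive.
Local Open Scope group_scope.

Section Bruhat.
Variable n : nat.
Local Notation Sn := {perm 'I_n}.

(* Permutations are viewed as functions 'I_n -> 'I_n.  In MathComp,
   (w * t) x = t (w x), so the composite t o w ("tw") is (w * t)%g. *)
Definition lmul (t w : Sn) : Sn := (w * t)%g.

Definition ell (w : Sn) : nat :=
  #|[set p : 'I_n * 'I_n | (p.1 < p.2)%N && (w p.2 < w p.1)%N]|.

Definition refls : {set Sn} :=
  [set t | [exists a : 'I_n, exists b : 'I_n, (a < b)%N && (t == tperm a b)]].

Definition bedge : rel Sn :=
  fun w x => [exists t in refls, (x == lmul t w) && (ell w < ell x)%N].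

(* label of an edge w -> x: the unique t with x = t w *)
Definition label (w x : Sn) : Sn := (w^-1 * x)%g.

Definition bruhat_le (u v : Sn) : bool := connect bedge u v.

Definition interval (u v : Sn) : {set Sn} :=
  [set x | bruhat_le u x && bruhat_le x v].

Definition antichain (Y : {set Sn}) : Prop :=
  forall y y', y \in Y -> y' \in Y -> y != y' -> ~~ bruhat_le y y'.

Definition diamond (u v x1 x2 x3 x4 : Sn) : Prop :=
  [/\ uniq [:: x1; x2; x3; x4],
      [/\ x1 \in interval u v, x2 \in interval u v,
          x3 \in interval u v & x4 \in interval u v],
      bedge x1 x2 /\ bedge x2 x4 & bedge x1 x3 /\ bedge x3 x4].

Definition diamond_closed (u v : Sn) (X : {set Sn}) : Prop :=
  X \subset interval u v /\
  forall x1 x2 x3 x4, diamond u v x1 x2 x3 x4 ->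
    (3 <= #|X :&: [set x1; x2; x3; x4]|)%N -> [set x1; x2; x3; x4] \subset X.

Definition Yset (u v : Sn) (I : {set Sn}) (x : Sn) : {set Sn} :=
  [set y in interval u v :\: I | bedge x y].

Definition in_Ax (u v : Sn) (I : {set Sn}) (x : Sn) (Y : {set Sn}) : Prop :=
  Y \subset Yset u v I x /\ antichain Y.

(* strong hypercube cluster at x (theta is only relevant on A_x) *)
Definition strong_cluster (u v : Sn) (I : {set Sn}) (x : Sn)
    (theta : {set Sn} -> Sn) : Prop :=
  [/\ (forall Y, in_Ax u v I x Y -> theta Y \in interval u v),
      theta set0 = x,
      (forall y, y \in Yset u v I x -> theta [set y] = y),
      (forall Y1 Y2, in_Ax u v I x Y1 -> in_Ax u v I x Y2 ->
                   Y1 \subset Y2 -> #|Y2 :\: Y1| = 1%N ->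
                   bedge (theta Y1) (theta Y2)) &
      (forall Y Y' w, in_Ax u v I x Y -> in_Ax u v I x Y' ->
                   #|Y| = #|Y'| -> #|Y| = #|Y :&: Y'|.+1%N ->
                   diamond u v (theta (Y :&: Y')) (theta Y) (theta Y') w ->
                   antichain (Y :|: Y') /\ theta (Y :|: Y') = w)].

Definition strong_hc_decomposition (u v z : Sn)
    (theta : Sn -> {set Sn} -> Sn) : Prop :=
  [/\ z \in interval u v,
      diamond_closed u v (interval u z) &
      forall x, x \in interval u z -> strong_cluster u v (interval u z) x (theta x)].

Definition reflection_order (prec : rel Sn) : Prop :=
  [/\ (forall t, t \in refls -> ~~ prec t t),
      (forall t1 t2 t3, t1 \in refls -> t2 \in refls -> t3 \in refls ->
         prec t1 t2 -> prec t2 t3 -> prec t1 t3),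
      (forall t1 t2, t1 \in refls -> t2 \in refls -> t1 != t2 ->
         prec t1 t2 || prec t2 t1) &
      (forall a b c : 'I_n, (a < b)%N -> (b < c)%N ->
         (prec (tperm a b) (tperm a c) && prec (tperm a c) (tperm b c)) ||
         (prec (tperm b c) (tperm a c) && prec (tperm a c) (tperm a b)))].

Definition increasing_path (prec : rel Sn) (p0 : Sn) (ps : seq Sn) : Prop :=
  path bedge p0 ps /\ sorted prec (pairmap label p0 ps).

Definition theta_chain (theta : {set Sn} -> Sn) (s : seq Sn) : seq Sn :=
  [seq theta [set x in take i s] | i <- iota 1 (size s)].

Definition good_ordering (prec : rel Sn) (theta : {set Sn} -> Sn)
    (Y : {set Sn}) (s : seq Sn) : Prop :=
  [/\ uniq s, [set x in s] = Y &
      increasing_path prec (theta set0) (theta_chain theta s)].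

End Bruhat.

(* Main.v *)
Require Import Defs.
From mathcomp Require Import all_boot all_fingroup.
Set Implicit Arguments. Unset Strict Implicit. Unset Printing Implicit Defensive.
Local Open Scope group_scope.

Ltac ltc := match goal with
 | H : is_true (?a < ?a)%N |- _ => by rewrite ltnn in H
 | H1 : is_true (?a < ?b)%N, H2 : is_true (?b < ?a)%N |- _ =>
     by move: (ltn_trans H1 H2); rewrite ltnn
 | H1 : is_true (?a < ?b)%N, H2 : is_true (?b < ?c)%N, H3 : is_true (?c < ?a)%N |- _ =>
     by move: (ltn_trans (ltn_trans H1 H2) H3); rewrite ltnn
 end.
Section Main.
Variable n : nat.
Local Notation Sn := {perm 'I_n}.

Lemma ell_le (w : Sn) (p q : 'I_n) : (p < q)%N -> (w^-1 p < w^-1 q)%N ->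
  (ell w <= ell (w * tperm p q)%g)%N.
Proof.
move=> pq posl.
set i0 := w^-1 p; set j0 := w^-1 q.
have wP : forall i, (w i == p) = (i == i0).
  by move=> i; rewrite /i0; apply/eqP/eqP => [<-|->]; rewrite ?permK ?permKV.
have wQ : forall i, (w i == q) = (i == j0).
  by move=> i; rewrite /j0; apply/eqP/eqP => [<-|->]; rewrite ?permK ?permKV.
have wi0 : w i0 = p by rewrite /i0 permKV.
have wj0 : w j0 = q by rewrite /j0 permKV.
have w'E : forall i, (w * tperm p q)%g i = if i == i0 then q else if i == j0 then p else w i.
  have ji : (j0 == i0) = false.
    by apply/negbTE; apply/eqP => E; move: posl; rewrite -/i0 -/j0 E ltnn.
  move=> i; rewrite permM; case: tpermP => [/eqP|/eqP|/eqP H1 /eqP H2].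
  - by rewrite wP => /eqP ->; rewrite eqxx.
  - by rewrite wQ => /eqP ->; rewrite ji eqxx.
  - by rewrite wP in H1; rewrite wQ in H2; rewrite (negbTE H1) (negbTE H2).
have l0 : (nat_of_ord i0 < nat_of_ord j0)%N := posl.
clearbody i0 j0.
pose phi (pr : 'I_n * 'I_n) :=
  if (pr.2 == i0) && (p < w pr.1 < q)%N then (pr.1, j0)
  else if (pr.1 == j0) && (p < w pr.2 < q)%N then (i0, pr.2) else pr.
have eqF : forall a b : 'I_n, (a < b)%N -> (a == b) = false.
  by move=> a b h; apply/negbTE/eqP => e; rewrite e ltnn in h.
have eqF' : forall a b : 'I_n, (a < b)%N -> (b == a) = false.
  by move=> a b h; rewrite eq_sym eqF.
rewrite /ell.
set A := [set _ | _ ]; set B := [set _ | _].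
have -> : #|A| = #|phi @: A|.
  apply/esym/card_in_imset => [[i j] [i' j']]; rewrite !inE /= /phi /=.
  move=> /andP[ij wji] /andP[ij' wji'].
  by repeat (case: ifP => [/andP[/eqP ? /andP[? ?]] | ?]); case=> *; subst;
    rewrite ?wi0 ?wj0 in wji wji' *; try done; ltc.
apply: subset_leq_card; apply/subsetP => _ /imsetP[[i j] ijA ->].
move: ijA; rewrite !inE /= /phi /= => /andP[ij wji].
case: ifP => [/andP[/eqP ji0 /andP[pw wq]]|c1].
  subst j; rewrite /= !w'E (eqF' _ _ l0) eqxx (eqF _ _ ij) (eqF _ _ (ltn_trans ij l0)) /=.
  by rewrite (ltn_trans ij l0) pw.
case: ifP => [/andP[/eqP ij0 /andP[pw wq]]|c2].
  subst i; rewrite /= !w'E eqxx (eqF' _ _ (ltn_trans l0 ij)) (eqF' _ _ ij) /=.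
  by rewrite (ltn_trans l0 ij) wq.
rewrite /= ij /= !w'E.
case: (eqVneq i i0) => [ei|ni].
  subst i; rewrite ?eqxx ?(eqF' _ _ ij).
  case: (eqVneq j j0) => [ej|nj].
    by subst j; rewrite wi0 wj0 in wji; ltc.
  by rewrite ?(negbTE nj); rewrite wi0 in wji; apply: ltn_trans wji pq.
case: (eqVneq i j0) => [ei|ni'].
  subst i; rewrite ?(eqF' _ _ (ltn_trans l0 ij)) ?(eqF' _ _ ij) ?(eqF' _ _ l0) ?eqxx /=.
  rewrite wj0 in wji; move: c2; rewrite eqxx /= wji andbT => /negbT; rewrite -leqNgt => le.
  rewrite ltn_neqAle le andbT.
  have : (w j == p) = false by rewrite wP (eqF' _ _ (ltn_trans l0 ij)).
  by move/negbT.
rewrite ?(negbTE ni) ?(negbTE ni').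
case: (eqVneq j i0) => [ej|nj].
  subst j; rewrite ?eqxx; rewrite wi0 in wji.
  move: c1; rewrite eqxx wji /= => /negbT; rewrite -leqNgt => le.
  rewrite ltn_neqAle le andbT.
  have : (w i == q) = false by rewrite wQ (negbTE ni').
  by move/negbT; rewrite eq_sym.
case: (eqVneq j j0) => [ej|nj'].
  by subst j; rewrite ?(eqF' _ _ l0) ?eqxx; rewrite wj0 in wji; apply: ltn_trans pq wji.
by rewrite ?(negbTE nj) ?(negbTE nj').
Qed.

Lemma posT (a : Sn) p q v : (a * tperm p q)^-1 v = a^-1 (tperm p q v).
Proof. by rewrite invMg permM tpermV. Qed.

Lemma edge_pos (w : Sn) (p q : 'I_n) : (p < q)%N -> (ell w < ell (w * tperm p q))%N ->
  (w^-1 p < w^-1 q)%N.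
Proof.
move=> pq lt; case: (ltngtP (w^-1 p) (w^-1 q)) => // h.
  have := @ell_le (w * tperm p q) p q pq; rewrite !posT tpermL tpermR => /(_ h).
  by rewrite -mulgA tperm2 mulg1 => le; move: lt; rewrite ltnNge le.
have /perm_inj e : w^-1 p = w^-1 q := val_inj h.
by rewrite e ltnn in pq.
Qed.

Lemma bedgeP (w x : Sn) : bedge w x -> exists p q : 'I_n,
  [/\ (p < q)%N, x = w * tperm p q, (w^-1 p < w^-1 q)%N & (ell w < ell x)%N].
Proof.
case/existsP => t /andP[tR /andP[/eqP xE lt]].
move: tR; rewrite inE => /existsP[p /existsP[q /andP[pq /eqP tE]]].
rewrite /lmul tE in xE; subst x.
by exists p, q; split => //; apply: edge_pos.
Qed.

Lemma bedge_ell (w x : Sn) : bedge w x -> (ell w < ell x)%N.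
Proof. by case/bedgeP => p [q [_ _ _ ->]]. Qed.

Lemma labelM (w t : Sn) : label w (w * t) = t.
Proof. by rewrite /label mulKg. Qed.

Lemma refl_tp (p q : 'I_n) : (p < q)%N -> tperm p q \in refls n.
Proof. by move=> pq; rewrite inE; apply/existsP; exists p; apply/existsP; exists q; rewrite pq eqxx. Qed.

Lemma label_refl (w x : Sn) : bedge w x -> label w x \in refls n.
Proof. by case/bedgeP => p [q [pq -> _ _]]; rewrite labelM refl_tp. Qed.

End Main.

Section G.
Variable n : nat.
Local Notation Sn := {perm 'I_n}.
Implicit Types (p q a b c d s x y z v : 'I_n).

Lemma tpermD' x y z : z != x -> z != y -> tperm x y z = z.
Proof. by move=> h1 h2; rewrite tpermD // eq_sym. Qed.

Lemma ltn_neq p q : (p < q)%N -> p != q.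
Proof. by move=> h; apply/eqP => e; rewrite e ltnn in h. Qed.

Lemma tperm_eq_of a b c d : a != b -> tperm c d b = a -> tperm c d = tperm a b.
Proof.
move=> ab; case: tpermP => [eb ea|eb ea|nb nd eba].
- by subst; rewrite tpermC.
- by subst.
- by move: ab; rewrite eba eqxx.
Qed.

Lemma mul_eq1 (s : Sn) p q : s * tperm p q = 1 -> s = tperm p q.
Proof. by move=> H; rewrite -(mulg1 s) -(tperm2 p q) mulgA H mul1g. Qed.

Lemma supp_sub p1 q1 p2 q2 p3 q3 p4 q4 :
  p3 != q3 -> p4 != q4 -> tperm p1 q1 != tperm p2 q2 ->
  tperm p1 q1 * tperm p2 q2 = tperm p3 q3 * tperm p4 q4 ->
  [/\ p3 \in [:: p1; q1; p2; q2], q3 \in [:: p1; q1; p2; q2],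
      p4 \in [:: p1; q1; p2; q2] & q4 \in [:: p1; q1; p2; q2]].
Proof.
move=> n3 n4 n12 E.
set U := [:: p1; q1; p2; q2].
have fixU : forall v, v \notin U -> (tperm p3 q3 * tperm p4 q4) v = v.
  move=> v; rewrite -E !inE !negb_or => /and4P[h1 h2 h3 h4].
  by rewrite permM !tpermD'.
have t34 : tperm p4 q4 != tperm p3 q3.
  apply: contra n12 => /eqP e; apply/eqP.
  by apply: mul_eq1; rewrite E e tperm2.
have P3 : p3 \in U.
  apply/negPn/negP => nU; move: (fixU _ nU); rewrite permM tpermL.
  by move=> /(tperm_eq_of n3) e; rewrite e eqxx in t34.
have Q3 : q3 \in U.
  apply/negPn/negP => nU; move: (fixU _ nU); rewrite permM tpermR.
  have n3' : q3 != p3 by rewrite eq_sym.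
  by move=> /(tperm_eq_of n3') e; rewrite e tpermC eqxx in t34.
have P4 : p4 \in U.
  apply/negPn/negP => nU.
  have h1 : p4 != p3 by apply/eqP => e; move: nU; rewrite e P3.
  have h2 : p4 != q3 by apply/eqP => e; move: nU; rewrite e Q3.
  move: (fixU _ nU); rewrite permM (tpermD' h1 h2).
  by rewrite tpermL => e; rewrite e eqxx in n4.
have Q4 : q4 \in U.
  apply/negPn/negP => nU.
  have h1 : q4 != p3 by apply/eqP => e; move: nU; rewrite e P3.
  have h2 : q4 != q3 by apply/eqP => e; move: nU; rewrite e Q3.
  move: (fixU _ nU); rewrite permM (tpermD' h1 h2).
  by rewrite tpermR => e; rewrite e eqxx in n4.
by [].
Qed.

Lemma share_bad s a b : s != a -> s != b -> a != b ->
  (tperm s a * tperm s b) ((tperm s a * tperm s b) a) != a.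
Proof.
move=> sa sb ab; have bs : b != s by rewrite eq_sym.
have ba : b != a by rewrite eq_sym.
by rewrite !permM tpermR tpermL (tpermD' bs ba) tpermR.
Qed.


Lemma disj_case p1 q1 p2 q2 p3 q3 p4 q4 :
  p1 != q1 -> p2 != q2 ->
  ~~ [|| p1 == p2, p1 == q2, q1 == p2 | q1 == q2] -> p3 != q3 -> p4 != q4 ->
  tperm p1 q1 != tperm p3 q3 ->
  tperm p1 q1 * tperm p2 q2 = tperm p3 q3 * tperm p4 q4 ->
  tperm p3 q3 = tperm p2 q2 /\ tperm p4 q4 = tperm p1 q1.
Proof.
move=> a1 c1; rewrite !negb_or => /and4P[a2 a3 b1 b2] n3 n4 n13 E.
have t2p1 : tperm p2 q2 p1 = p1 by rewrite tpermD'.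
have t2q1 : tperm p2 q2 q1 = q1 by rewrite tpermD'.
have t1p2 : tperm p1 q1 p2 = p2 by rewrite tpermD' // eq_sym.
have t1q2 : tperm p1 q1 q2 = q2 by rewrite tpermD' // eq_sym.
have comm : tperm p2 q2 * (tperm p1 q1 * tperm p2 q2) = tperm p1 q1.
  by rewrite -{1}(tpermV p2 q2) -conjgE tpermJ t2p1 t2q1.
have n12 : tperm p1 q1 != tperm p2 q2.
  apply/eqP => e; have := congr1 (fun s : Sn => s p1) e.
  by rewrite /= tpermL t2p1 => e'; rewrite e' eqxx in a1.
have [P3 Q3 P4 Q4] := supp_sub n3 n4 n12 E.
have sq : forall v, (tperm p3 q3 * tperm p4 q4) ((tperm p3 q3 * tperm p4 q4) v) = v.
  by move=> v; rewrite -E -permM -mulgA comm tperm2 perm1.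
have t34 : tperm p3 q3 != tperm p4 q4.
  apply: contra n12 => /eqP e; apply/eqP.
  by apply: mul_eq1; rewrite E e tperm2.
case sh: [|| p3 == p4, p3 == q4, q3 == p4 | q3 == q4].
  exfalso; case/or4P: sh => /eqP e.
  - rewrite -e in sq t34 n4.
    have ab : q3 != q4 by apply: contra t34 => /eqP ->.
    by move: (share_bad n3 n4 ab); rewrite sq eqxx.
  - rewrite -e [tperm p4 p3]tpermC in sq t34; rewrite -e eq_sym in n4.
    have ab : q3 != p4 by apply: contra t34 => /eqP ->.
    by move: (share_bad n3 n4 ab); rewrite sq eqxx.
  - rewrite -e [tperm p3 q3]tpermC in sq t34; rewrite eq_sym in n3; rewrite -e in n4.
    have ab : p3 != q4 by apply: contra t34 => /eqP ->.
    by move: (share_bad n3 n4 ab); rewrite sq eqxx.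
  - rewrite -e [tperm p3 q3]tpermC [tperm p4 q3]tpermC in sq t34.
    rewrite eq_sym in n3; rewrite -e eq_sym in n4.
    have ab : p3 != p4 by apply: contra t34 => /eqP ->.
    by move: (share_bad n3 n4 ab); rewrite sq eqxx.
move/negbT: sh; rewrite !negb_or => /and4P[_ _ d1 d2].
have h : (tperm p1 q1 * tperm p2 q2) p3 = q3 by rewrite E permM tpermL tpermD'.
have fin : tperm p3 q3 = tperm p2 q2 -> tperm p4 q4 = tperm p1 q1.
  move=> e3; rewrite e3 in E.
  by rewrite -[tperm p4 q4](tpermKg p2 q2) -E comm.
move: P3; rewrite !inE => /or4P[] /eqP e; subst p3; rewrite permM in h.
- by move: h; rewrite tpermL t2q1 => e; rewrite e eqxx in n13.
- by move: h; rewrite tpermR t2p1 => e; rewrite e tpermC eqxx in n13.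
- move: h; rewrite t1p2 tpermL => e; rewrite -e in fin *.
  by split=> //; apply: fin.
- move: h; rewrite t1q2 tpermR => e; rewrite -e in fin *.
  have e3 : tperm q2 p2 = tperm p2 q2 by rewrite tpermC.
  by split=> //; apply: fin.
Qed.

Lemma share_triple p1 q1 p2 q2 : (p1 < q1)%N -> (p2 < q2)%N ->
  tperm p1 q1 != tperm p2 q2 ->
  [|| p1 == p2, p1 == q2, q1 == p2 | q1 == q2] ->
  exists x y z, [/\ (x < y)%N, (y < z)%N & all (mem [:: x; y; z]) [:: p1; q1; p2; q2]].
Proof.
move=> l1 l2 n12 /or4P[] /eqP e.
- rewrite -e in l2 n12 *; case: (ltngtP q1 q2) => h.
  + by exists p1, q1, q2; rewrite /= !inE !eqxx !orbT.
  + by exists p1, q2, q1; rewrite /= !inE !eqxx !orbT.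
  + by move/val_inj: h n12 => ->; rewrite eqxx.
- rewrite -e in l2 *.
  by exists p2, p1, q1; rewrite /= !inE !eqxx !orbT.
- rewrite -e in l2 *.
  by exists p1, q1, q2; rewrite /= !inE !eqxx !orbT.
- rewrite -e in l2 n12 *; case: (ltngtP p1 p2) => h.
  + by exists p1, p2, q1; rewrite /= !inE !eqxx !orbT.
  + by exists p2, p1, q1; rewrite /= !inE !eqxx !orbT.
  + by move/val_inj: h n12 => ->; rewrite eqxx.
Qed.

Lemma tri_cases x y z p q : (x < y)%N -> (y < z)%N -> (p < q)%N ->
  p \in [:: x; y; z] -> q \in [:: x; y; z] ->
  [\/ p = x /\ q = y, p = x /\ q = z | p = y /\ q = z].
Proof.
move=> xy yz pq; rewrite !inE => /or3P[] /eqP e1 /or3P[] /eqP e2; subst;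
  first [ by apply: Or31 | by apply: Or32 | by apply: Or33 | ltc ].
Qed.

Lemma ro_tri (prec : rel Sn) : reflection_order prec -> forall x y z, (x < y)%N -> (y < z)%N ->
  [/\ prec (tperm x y) (tperm x y) = false, prec (tperm x z) (tperm x z) = false,
      prec (tperm y z) (tperm y z) = false &
   (prec (tperm x y) (tperm x z) = true /\ prec (tperm x z) (tperm y z) = true /\
    prec (tperm x y) (tperm y z) = true /\ prec (tperm x z) (tperm x y) = false /\
    prec (tperm y z) (tperm x z) = false /\ prec (tperm y z) (tperm x y) = false) \/
   (prec (tperm x y) (tperm x z) = false /\ prec (tperm x z) (tperm y z) = false /\
    prec (tperm x y) (tperm y z) = false /\ prec (tperm x z) (tperm x y) = true /\
    prec (tperm y z) (tperm x z) = true /\ prec (tperm y z) (tperm x y) = true)].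
Proof.
case=> irr tr _ tri x y z xy yz.
have xz : (x < z)%N by apply: ltn_trans yz.
have RA := refl_tp xy; have RB := refl_tp xz; have RC := refl_tp yz.
have iA := negbTE (irr _ RA); have iB := negbTE (irr _ RB); have iC := negbTE (irr _ RC).
split => //.
have asym : forall t1 t2, t1 \in refls n -> t2 \in refls n -> prec t1 t2 -> prec t2 t1 = false.
  move=> t1 t2 R1 R2 h; apply/negbTE/negP => h'.
  by move: (irr _ R1); rewrite (tr _ _ _ R1 R2 R1 h h').
case/orP: (tri x y z xy yz) => /andP[h1 h2].
- have h3 := tr _ _ _ RA RB RC h1 h2.
  left; rewrite h1 h2 h3 (asym _ _ RA RB h1) (asym _ _ RB RC h2) (asym _ _ RA RC h3).
  by [].
- have h3 := tr _ _ _ RC RB RA h1 h2.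
  right; rewrite h1 h2 h3 (asym _ _ RC RB h1) (asym _ _ RB RA h2) (asym _ _ RC RA h3).
  by [].
Qed.

End G.

Section Sq.
Variable n : nat.
Local Notation Sn := {perm 'I_n}.

Lemma square (prec : rel Sn) (ro : reflection_order prec) (a b c d : Sn) :
  bedge a b -> bedge b d -> bedge a c -> bedge c d -> b != c ->
  (prec (label a b) (label b d) || prec (label a c) (label c d)) &&
  (prec (label a b) (label b d) ==> prec (label a b) (label a c)).
Proof.
move=> e1 e2 e3 e4 bc.
have ell2 := bedge_ell e2; have ell1 := bedge_ell e1.
move: e1 e2 e3 e4 => /bedgeP[p1 [q1 [l1 eb pos1 _]]] /bedgeP[p2 [q2 [l2 ed pos2 _]]].
move=> /bedgeP[p3 [q3 [l3 ec pos3 _]]] /bedgeP[p4 [q4 [l4 ed' pos4 _]]].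
subst b c d.
have -> : label (a * tperm p3 q3) (a * tperm p1 q1 * tperm p2 q2) = tperm p4 q4.
  by rewrite ed' labelM.
rewrite !labelM.
have E : tperm p1 q1 * tperm p2 q2 = tperm p3 q3 * tperm p4 q4.
  by apply: (@mulgI _ a); rewrite !mulgA.
have n13 : tperm p1 q1 != tperm p3 q3 by apply: contra bc => /eqP ->.
have n12 : tperm p1 q1 != tperm p2 q2.
  apply/eqP => e; move: ell2; rewrite -e -mulgA tperm2 mulg1 => h.
  by move: (ltn_trans ell1 h); rewrite ltnn.
rewrite !posT in pos2 pos4.
case: ro => irr tr tot tri.
case sh: [|| p1 == p2, p1 == q2, q1 == p2 | q1 == q2]; last first.
  have [-> ->] := disj_case (ltn_neq l1) (ltn_neq l2) (negbT sh) (ltn_neq l3) (ltn_neq l4) n13 E.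
  by rewrite implybb andbT; apply: tot => //; apply: refl_tp.
have [x [y [z [xy yz]]]] := share_triple l1 l2 n12 sh; rewrite /= => /and5P[m1 m2 m3 m4 _].
have [s3 s4 s5 s6] := supp_sub (ltn_neq l3) (ltn_neq l4) n12 E.
have inT : forall v, v \in [:: p1; q1; p2; q2] -> v \in [:: x; y; z].
  by move=> v H; rewrite !inE in H; case/or4P: H => /eqP ->.
have C1 := tri_cases xy yz l1 m1 m2; have C2 := tri_cases xy yz l2 m3 m4.
have C3 := tri_cases xy yz l3 (inT _ s3) (inT _ s4).
have C4 := tri_cases xy yz l4 (inT _ s5) (inT _ s6).
have [iA iB iC P] := ro_tri (And4 irr tr tot tri) xy yz.
have xz : (x < z)%N by apply: ltn_trans yz.
have xy' := ltn_neq xy; have yz' := ltn_neq yz; have xz' := ltn_neq xz.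
have yx' : y != x by rewrite eq_sym.
have zy' : z != y by rewrite eq_sym.
have zx' : z != x by rewrite eq_sym.
clear s3 s4 s5 s6 m1 m2 m3 m4 inT sh.
case: C1 => [[? ?]|[? ?]|[? ?]]; subst p1 q1;
case: C2 => [[? ?]|[? ?]|[? ?]]; subst p2 q2;
case: C3 => [[? ?]|[? ?]|[? ?]]; subst p3 q3;
case: C4 => [[? ?]|[? ?]|[? ?]]; subst p4 q4;
do 2 rewrite ?tpermL ?tpermR ?(tpermD' zx' zy') ?(tpermD' yx' yz') ?(tpermD' xy' xz') in pos2 pos4;
first [ by rewrite eqxx in n13 | by rewrite eqxx in n12
      | (case: P => [[h1 [h2 [h3 [h4 [h5 h6]]]]]|[h1 [h2 [h3 [h4 [h5 h6]]]]]];
         by rewrite ?h1 ?h2 ?h3 ?h4 ?h5 ?h6 ?iA ?iB ?iC)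
      | ltc
      | (move: (congr1 (fun s : Sn => s x) E);
         rewrite /= !permM; do 3 rewrite ?tpermL ?tpermR ?(tpermD' zx' zy') ?(tpermD' yx' yz') ?(tpermD' xy' xz');
         move/eqP; rewrite ?(negbTE xy') ?(negbTE yx') ?(negbTE xz') ?(negbTE zx') ?(negbTE yz') ?(negbTE zy') //)
      | (move: (congr1 (fun s : Sn => s y) E);
         rewrite /= !permM; do 3 rewrite ?tpermL ?tpermR ?(tpermD' zx' zy') ?(tpermD' yx' yz') ?(tpermD' xy' xz');
         move/eqP; rewrite ?(negbTE xy') ?(negbTE yx') ?(negbTE xz') ?(negbTE zx') ?(negbTE yz') ?(negbTE zy') //)
      | (move: (congr1 (fun s : Sn => s z) E);
         rewrite /= !permM; do 3 rewrite ?tpermL ?tpermR ?(tpermD' zx' zy') ?(tpermD' yx' yz') ?(tpermD' xy' xz');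
         move/eqP; rewrite ?(negbTE xy') ?(negbTE yx') ?(negbTE xz') ?(negbTE zx') ?(negbTE yz') ?(negbTE zy') //) ].
Qed.

Lemma inj3 (a w b1 b2 b3 : Sn) : bedge a b1 -> bedge b1 w -> bedge a b2 -> bedge b2 w ->
  bedge a b3 -> bedge b3 w -> b1 != b2 -> b1 != b3 -> b2 != b3 -> False.
Proof.
move=> e1 e2 e3 e4 e5 e6 b12 b13 b23.
have ell2 := bedge_ell e2; have ell1 := bedge_ell e1.
move: e1 e2 e3 e4 e5 e6 => /bedgeP[p1 [q1 [l1 eb1 pos1 _]]] /bedgeP[p2 [q2 [l2 ew pos2 _]]].
move=> /bedgeP[p3 [q3 [l3 eb2 pos3 _]]] /bedgeP[p4 [q4 [l4 ew' pos4 _]]].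
move=> /bedgeP[p5 [q5 [l5 eb3 pos5 _]]] /bedgeP[p6 [q6 [l6 ew'' pos6 _]]].
subst b1 b2 b3 w.
have E13 : tperm p1 q1 * tperm p2 q2 = tperm p3 q3 * tperm p4 q4.
  by apply: (@mulgI _ a); rewrite !mulgA.
have E15 : tperm p1 q1 * tperm p2 q2 = tperm p5 q5 * tperm p6 q6.
  by apply: (@mulgI _ a); rewrite !mulgA.
have n13 : tperm p1 q1 != tperm p3 q3 by apply: contra b12 => /eqP ->.
have n15 : tperm p1 q1 != tperm p5 q5 by apply: contra b13 => /eqP ->.
have n35 : tperm p3 q3 != tperm p5 q5 by apply: contra b23 => /eqP ->.
have n12 : tperm p1 q1 != tperm p2 q2.
  apply/eqP => e; move: ell2; rewrite -e -mulgA tperm2 mulg1 => h.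
  by move: (ltn_trans ell1 h); rewrite ltnn.
rewrite !posT in pos2 pos4 pos6.
case sh: [|| p1 == p2, p1 == q2, q1 == p2 | q1 == q2]; last first.
  have [e3 _] := disj_case (ltn_neq l1) (ltn_neq l2) (negbT sh) (ltn_neq l3) (ltn_neq l4) n13 E13.
  have [e5 _] := disj_case (ltn_neq l1) (ltn_neq l2) (negbT sh) (ltn_neq l5) (ltn_neq l6) n15 E15.
  by rewrite e3 e5 eqxx in n35.
have [x [y [z [xy yz]]]] := share_triple l1 l2 n12 sh; rewrite /= => /and5P[m1 m2 m3 m4 _].
have [s3 s4 s5 s6] := supp_sub (ltn_neq l3) (ltn_neq l4) n12 E13.
have [r3 r4 r5 r6] := supp_sub (ltn_neq l5) (ltn_neq l6) n12 E15.
have inT : forall v, v \in [:: p1; q1; p2; q2] -> v \in [:: x; y; z].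
  by move=> v H; rewrite !inE in H; case/or4P: H => /eqP ->.
have C1 := tri_cases xy yz l1 m1 m2; have C2 := tri_cases xy yz l2 m3 m4.
have C3 := tri_cases xy yz l3 (inT _ s3) (inT _ s4).
have C4 := tri_cases xy yz l4 (inT _ s5) (inT _ s6).
have C5 := tri_cases xy yz l5 (inT _ r3) (inT _ r4).
have C6 := tri_cases xy yz l6 (inT _ r5) (inT _ r6).
have xz : (x < z)%N by apply: ltn_trans yz.
have xy' := ltn_neq xy; have yz' := ltn_neq yz; have xz' := ltn_neq xz.
have yx' : y != x by rewrite eq_sym.
have zy' : z != y by rewrite eq_sym.
have zx' : z != x by rewrite eq_sym.
clear s3 s4 s5 s6 r3 r4 r5 r6 m1 m2 m3 m4 inT sh E13 E15.
case: C1 => [[? ?]|[? ?]|[? ?]]; subst p1 q1;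
case: C3 => [[? ?]|[? ?]|[? ?]]; subst p3 q3;
case: C5 => [[? ?]|[? ?]|[? ?]]; subst p5 q5;
try (by rewrite eqxx in n13); try (by rewrite eqxx in n15); try (by rewrite eqxx in n35);
case: C2 => [[? ?]|[? ?]|[? ?]]; subst p2 q2;
case: C4 => [[? ?]|[? ?]|[? ?]]; subst p4 q4;
case: C6 => [[? ?]|[? ?]|[? ?]]; subst p6 q6;
do 2 rewrite ?tpermL ?tpermR ?(tpermD' zx' zy') ?(tpermD' yx' yz') ?(tpermD' xy' xz') in pos2 pos4 pos6;
ltc.
Qed.

End Sq.

Section Cube.
Variable n : nat.
Local Notation Sn := {perm 'I_n}.
Variables (th : {set Sn} -> Sn) (Y : {set Sn}) (prec : rel Sn).
Hypothesis ro : reflection_order prec.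
Hypothesis hc2 : forall y, y \in Y -> th [set y] = y.
Hypothesis hc3 : forall (S : {set Sn}) y, S \subset Y -> y \in Y -> y \notin S -> bedge (th S) (th (y |: S)).

Lemma setin_cons (a : Sn) s : [set v in a :: s] = a |: [set v in s].
Proof. by apply/setP => v; rewrite !inE. Qed.

Lemma thinj k : forall (S : {set Sn}) y y', (#|S| <= k)%N -> S \subset Y -> y \in Y -> y' \in Y ->
  y \notin S -> y' \notin S -> y != y' -> th (y |: S) != th (y' |: S).
Proof.
elim: k => [|k IH] S y y' cS SY yY y'Y yS y'S yy'.
  move: cS; rewrite leqn0 => /eqP/cards0_eq ->.
  by rewrite !setU0 !hc2.
case: (eqVneq S set0) => [->|/set0Pn[s sS]]; first by rewrite !setU0 !hc2.
set R := S :\ s.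
have RS : R \subset S by apply: subD1set.
have RY : R \subset Y by apply: subset_trans SY.
have cR : (#|R| <= k)%N by move: cS; rewrite (cardsD1 s S) sS.
have sY : s \in Y by apply: (subsetP SY).
have sR : s \notin R by rewrite !inE eqxx.
have yR : y \notin R by apply: contra yS; apply: (subsetP RS).
have y'R : y' \notin R by apply: contra y'S; apply: (subsetP RS).
have sy : s != y by apply: contraNneq yS => <-.
have sy' : s != y' by apply: contraNneq y'S => <-.
have SE : s |: R = S by rewrite setD1K.
have b1 := IH _ _ _ cR RY sY yY sR yR sy.
have b2 := IH _ _ _ cR RY sY y'Y sR y'R sy'.
have b3 := IH _ _ _ cR RY yY y'Y yR y'R yy'.
apply/negP => /eqP wE.
have yyR : (y |: R) \subset Y by rewrite subUset sub1set yY RY.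
have y'y'R : (y' |: R) \subset Y by rewrite subUset sub1set y'Y RY.
have syR : s \notin y |: R by rewrite in_setU1 negb_or sy sR.
have sy'R : s \notin y' |: R by rewrite in_setU1 negb_or sy' sR.
have ysR : y \notin s |: R by rewrite SE.
have ep1 := hc3 RY sY sR; have ep2 := hc3 RY yY yR; have ep3 := hc3 RY y'Y y'R.
have sRY : (s |: R) \subset Y by rewrite SE.
rewrite -SE in wE.
have eq1 := hc3 sRY yY ysR.
have eq2 := hc3 yyR sY syR; rewrite setUCA in eq2.
have eq3 := hc3 y'y'R sY sy'R; rewrite setUCA -wE in eq3.
exact: (inj3 ep1 eq1 ep2 eq2 ep3 eq3 b1 b2 b3).
Qed.


Definition chainS (S : {set Sn}) (s : seq Sn) :=
  [seq th (S :|: [set v in take i s]) | i <- iota 1 (size s)].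

Definition goodS (S : {set Sn}) (s : seq Sn) :=
  [/\ uniq s, [set v in s] = Y :\: S & increasing_path prec (th S) (chainS S s)].

Definition lam (S : {set Sn}) y := label (th S) (th (y |: S)).

Lemma chain_cons S y s : chainS S (y :: s) = th (y |: S) :: chainS (y |: S) s.
Proof.
rewrite /chainS /= take0.
have -> : S :|: [set v in [:: y]] = y |: S.
  by apply/setP => v; rewrite !inE ?orbF orbC.
congr (_ :: _).
rewrite -(addn1 1) iotaDl -map_comp; apply: eq_map => i /=.
rewrite ?add1n /= setin_cons; congr (th _).
by rewrite setUCA setUA.
Qed.

Lemma chain_nil S : chainS S [::] = [::].
Proof. by []. Qed.

Lemma inc_cons p0 p1 ps : increasing_path prec p0 (p1 :: ps) <->
  [/\ bedge p0 p1, increasing_path prec p1 ps &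
      (if ps is p2 :: _ then prec (label p0 p1) (label p1 p2) else true)].
Proof.
rewrite /increasing_path /=; case: ps => [|p2 ps] /=.
  by split => [[/andP[-> _] _]|[-> _ _]].
split => [[/andP[-> /andP[-> ->]] /andP[-> ->]]|[-> [/andP[-> ->] ->] ->]] //.
Qed.

Lemma exists_min (A : {set Sn}) (f : Sn -> Sn) : A != set0 -> {in A &, injective f} ->
  {in A, forall y, f y \in refls n} ->
  exists2 y, y \in A & forall y', y' \in A -> y' != y -> prec (f y) (f y').
Proof.
case: ro => irr tr tot _.
move=> /set0Pn[y0 Ay0] finj fR.
pose m y := #|[set y' in A | prec (f y') (f y)]|.
case: (@arg_minnP _ y0 (fun y => y \in A) m Ay0) => y Ay ymin.
exists y => // y' Ay' ne.
apply/negPn/negP => np.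
have fne : f y != f y' by apply: contra ne => /eqP /finj e; rewrite e.
have h : prec (f y') (f y).
  by have := tot _ _ (fR _ Ay) (fR _ Ay') fne; rewrite (negbTE np).
have : (m y' < m y)%N.
  apply: proper_card; apply/properP; split.
  - apply/subsetP => v; rewrite !inE => /andP[Av pv]; rewrite Av /=.
    exact: (tr _ _ _ (fR _ Av) (fR _ Ay') (fR _ Ay) pv h).
  - by exists y'; rewrite !inE Ay' /= ?h ?(negbTE (irr _ (fR _ Ay'))).
by rewrite ltnNge ymin.
Qed.

Lemma lam_refl (S : {set Sn}) y : S \subset Y -> y \in Y -> y \notin S -> lam S y \in refls n.
Proof. by move=> SY yY yS; apply: label_refl; apply: hc3. Qed.

Lemma good_nil (S : {set Sn}) s : goodS S s -> Y :\: S = set0 -> s = [::].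
Proof.
case: s => // y s [_ E _] E0.
have : y \in [set v in y :: s] by rewrite inE mem_head.
by rewrite E E0 inE.
Qed.

Lemma good_tail (S : {set Sn}) y1 s1 : goodS S (y1 :: s1) ->
  [/\ y1 \in Y :\: S, goodS (y1 |: S) s1, bedge (th S) (th (y1 |: S)) &
      (if s1 is z :: _ then prec (lam S y1) (lam (y1 |: S) z) else true)].
Proof.
case=> /andP[nin u] E; rewrite chain_cons => /inc_cons[ed inc cond].
have y1A : y1 \in Y :\: S by rewrite -E inE mem_head.
split => //.
  split => //; apply/setP => v; move/setP: E => /(_ v); rewrite !inE.
  case: (eqVneq v y1) => [->|ne] /=; first by rewrite (negbTE nin).
  by [].
by case: s1 {nin u E inc} cond => // z s2; rewrite chain_cons.
Qed.

Lemma good_cons (S : {set Sn}) y s1 : y \in Y :\: S -> goodS (y |: S) s1 ->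
  bedge (th S) (th (y |: S)) ->
  (if s1 is z :: _ then prec (lam S y) (lam (y |: S) z) else true) ->
  goodS S (y :: s1).
Proof.
move=> yA [u E inc] ed cond; split.
- rewrite /= u andbT; apply/negP => ys.
  have : y \in [set v in s1] by rewrite inE.
  by rewrite E !inE eqxx.
- apply/setP => v; rewrite setin_cons E !inE.
  case: (eqVneq v y) => [->|ne] //=.
  by move: yA; rewrite !inE.
- rewrite chain_cons; apply/inc_cons; split => //.
  by case: s1 {u E inc} cond => // z s2; rewrite chain_cons.
Qed.

Lemma main_ind k : forall S : {set Sn}, S \subset Y -> #|Y :\: S| = k ->
  [/\ exists s, goodS S s,
      (forall y1 s1, goodS S (y1 :: s1) -> forall y, y \in Y :\: S -> y != y1 ->
         prec (lam S y1) (lam S y)) &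
      (forall s s', goodS S s -> goodS S s' -> s = s')].
Proof.
have [irr tr tot _] := ro.
elim: k => [|k IH] S SY cS.
  have E0 : Y :\: S = set0 := cards0_eq cS.
  split.
  - by exists [::]; split => //; rewrite E0; apply/setP => v; rewrite !inE.
  - move=> y1 s1 [_ E _]; have : y1 \in [set v in y1 :: s1] by rewrite inE mem_head.
    by rewrite E E0 inE.
  - by move=> s s' g g'; rewrite (good_nil g E0) (good_nil g' E0).
have tailcard : forall y, y \in Y :\: S -> #|Y :\: (y |: S)| = k /\ (y |: S) \subset Y.
  move=> y yA; split.
    have -> : Y :\: (y |: S) = (Y :\: S) :\ y.
      by apply/setP => v; rewrite !inE negb_or andbA.
    by move: cS; rewrite (cardsD1 y) yA add1n => [[]].
  by rewrite subUset sub1set SY andbT; move: yA; rewrite inE => /andP[].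
have inA : forall (T : {set Sn}) y, y \in Y :\: T -> y \in Y /\ y \notin T.
  by move=> T y; rewrite inE => /andP[].
have Pb : forall y1 s1, goodS S (y1 :: s1) -> forall y, y \in Y :\: S -> y != y1 ->
         prec (lam S y1) (lam S y).
  move=> y1 s1 g y yA yy1.
  have [y1A g1 e1 cond] := good_tail g.
  have [c1 S1Y] := tailcard _ y1A.
  have [_ IHb _] := IH _ S1Y c1.
  have [y1Y y1S] := inA _ _ y1A; have [yY yS] := inA _ _ yA.
  have yS1 : y \notin y1 |: S by rewrite in_setU1 negb_or yy1.
  have yin : y \in [set v in s1].
    by case: g1 => _ -> _; rewrite !inE negb_or yy1 yS yY.
  case: s1 g g1 cond yin => [|z s2] g g1 cond yin; first by rewrite inE in yin.
  have P1 : prec (lam S y1) (lam (y1 |: S) y).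
    case: (eqVneq y z) => [->//|yz].
    have zA : z \in Y :\: (y1 |: S) by case: g1 => _ <- _; rewrite inE mem_head.
    have [zY zS1] := inA _ _ zA.
    have yA1 : y \in Y :\: (y1 |: S) by rewrite inE yS1 yY.
    exact: (tr _ _ _ (lam_refl SY y1Y y1S) (lam_refl S1Y zY zS1) (lam_refl S1Y yY yS1)
              cond (IHb z s2 g1 y yA1 yz)).
  have e2 : bedge (th (y1 |: S)) (th (y |: (y1 |: S))) := hc3 S1Y yY yS1.
  have e3 : bedge (th S) (th (y |: S)) := hc3 SY yY yS.
  have ySY : (y |: S) \subset Y by rewrite subUset sub1set yY SY.
  have y1yS : y1 \notin y |: S by rewrite in_setU1 negb_or eq_sym yy1 y1S.
  have e4 := hc3 ySY y1Y y1yS; rewrite setUCA in e4.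
  have bc : th (y1 |: S) != th (y |: S).
    by apply: (@thinj #|S| S y1 y (leqnn _) SY y1Y yY y1S yS); rewrite eq_sym.
  have /andP[_ /implyP] := square ro e1 e2 e3 e4 bc.
  by apply.
have neA : Y :\: S != set0 by apply/eqP => E; rewrite E cards0 in cS.
split => //.
- have lamR : {in Y :\: S, forall y, lam S y \in refls n}.
    by move=> y /inA[]; apply: lam_refl.
  have lamI : {in Y :\: S &, injective (lam S)}.
    move=> y y' yA y'A; rewrite /lam /label => /mulgI /eqP.
    have [yY yS] := inA _ _ yA; have [y'Y y'S] := inA _ _ y'A.
    case: (eqVneq y y') => // ne.
    by rewrite (negbTE (@thinj #|S| S y y' (leqnn _) SY yY y'Y yS y'S ne)).
  have [y yA ymin] := exists_min neA lamI lamR.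
  have [c1 S1Y] := tailcard _ yA.
  have [[s1 g1] _ _] := IH _ S1Y c1.
  have [yY yS] := inA _ _ yA.
  exists (y :: s1); apply: good_cons => //; first exact: hc3.
  case: s1 g1 => [//|z s2] g1.
  apply/negPn/negP => np.
  have zA1 : z \in Y :\: (y |: S) by case: g1 => _ <- _; rewrite inE mem_head.
  have [zY zyS] := inA _ _ zA1.
  move: zyS; rewrite in_setU1 negb_or => /andP[zy zS].
  have zA : z \in Y :\: S by rewrite inE zS zY.
  have e1 : bedge (th S) (th (y |: S)) := hc3 SY yY yS.
  have yzS : z \notin y |: S by rewrite in_setU1 negb_or zy zS.
  have e2 : bedge (th (y |: S)) (th (z |: (y |: S))) := hc3 S1Y zY yzS.
  have e3 : bedge (th S) (th (z |: S)) := hc3 SY zY zS.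
  have zSY : (z |: S) \subset Y by rewrite subUset sub1set zY SY.
  have yzS' : y \notin z |: S by rewrite in_setU1 negb_or eq_sym zy yS.
  have e4 := hc3 zSY yY yzS'; rewrite setUCA in e4.
  have bc : th (y |: S) != th (z |: S).
    by apply: (@thinj #|S| S y z (leqnn _) SY yY zY yS zS); rewrite eq_sym.
  have cb : th (z |: S) != th (y |: S) by rewrite eq_sym.
  have /andP[h1 _] := square ro e1 e2 e3 e4 bc.
  rewrite (negbTE np) /= in h1.
  have /andP[_ /implyP /(_ h1) h2] := square ro e3 e4 e1 e2 cb.
  have h3 := ymin z zA zy.
  have := tr _ _ _ (lamR _ yA) (lamR _ zA) (lamR _ yA) h3 h2.
  by rewrite (negbTE (irr _ (lamR _ yA))).
- move=> s s' g g'.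
  have nilset : [set v in ([::] : seq Sn)] = set0 by apply/setP => v; rewrite !inE.
  case: s g => [|y1 s1] g; first by move: neA; case: g => _ <- _; rewrite nilset eqxx.
  case: s' g' => [|y1' s1'] g'; first by move: neA; case: g' => _ <- _; rewrite nilset eqxx.
  have [y1A g1 _ _] := good_tail g; have [y1A' g1' _ _] := good_tail g'.
  case: (eqVneq y1' y1) => [e|ne].
    subst y1'; have [c1 S1Y] := tailcard _ y1A.
    have [_ _ IHc] := IH _ S1Y c1.
    by rewrite (IHc _ _ g1 g1').
  have h1 := Pb _ _ g _ y1A' ne.
  have ne' : y1 != y1' by rewrite eq_sym.
  have h2 := Pb _ _ g' _ y1A ne'.
  have [y1Y y1S] := inA _ _ y1A; have [y1Y' y1S'] := inA _ _ y1A'.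
  have := tr _ _ _ (lam_refl SY y1Y y1S) (lam_refl SY y1Y' y1S') (lam_refl SY y1Y y1S) h1 h2.
  by rewrite (negbTE (irr _ (lam_refl SY y1Y y1S))).
Qed.

End Cube.

Local Close Scope group_scope.
Lemma good0 (n : nat) (th : {set {perm 'I_n}} -> {perm 'I_n}) (Y : {set {perm 'I_n}})
  (prec : rel {perm 'I_n}) s :
  good_ordering prec th Y s <-> goodS th Y prec set0 s.
Proof.
have E : chainS th set0 s = theta_chain th s.
  by rewrite /chainS /theta_chain; apply: eq_map => i; rewrite set0U.
by rewrite /good_ordering /goodS setD0 E.
Qed.

Unset Implicit Arguments.

Theorem lemma3p11 (n : nat) (u v z : {perm 'I_n})
    (theta : {perm 'I_n} -> {set {perm 'I_n}} -> {perm 'I_n})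
    (prec : rel {perm 'I_n}) :
  bruhat_le u v ->
  strong_hc_decomposition u v z theta ->
  reflection_order prec ->
  forall x Y, x \in interval u z -> in_Ax u v (interval u z) x Y ->
    exists s, good_ordering prec (theta x) Y s /\
      forall s', good_ordering prec (theta x) Y s' -> s' = s.
Proof.
move=> _ [zI dc clus] ro x Y xI [YY antiY].
have [_ hc1 hc2 hc3 _] := clus x xI.
have hc2' : forall y, y \in Y -> theta x [set y] = y.
  by move=> y yY; apply: hc2; apply: (subsetP YY).
have inAx : forall S : {set {perm 'I_n}}, S \subset Y -> in_Ax u v (interval u z) x S.
  move=> S SY; split; first exact: subset_trans SY YY.
  by move=> a b aS bS ab; apply: antiY => //; apply: (subsetP SY).
have hc3' : forall (S : {set {perm 'I_n}}) y, S \subset Y -> y \in Y -> y \notin S ->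
    bedge (theta x S) (theta x (y |: S)).
  move=> S y SY yY yS; apply: hc3.
  - exact: inAx.
  - by apply: inAx; rewrite subUset sub1set yY SY.
  - exact: subsetUr.
  - have -> : (y |: S) :\: S = [set y].
      apply/setP => w; rewrite !inE; case: eqVneq => [->|] //=; first by rewrite yS.
      by case: (w \in S).
    by rewrite cards1.
have [[s g] _ uS] := main_ind ro hc2' hc3' (sub0set Y) (erefl #|Y :\: set0|).
exists s; split; first by apply/good0.
by move=> s' /good0 g'; apply: uS.
Qed.
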